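(* If $f$ has the saddle property, then the set $$\mathcal Q_{f\text{-DPI}}=\{Q \text{ pmf on }\mathcal Z:\ Q_S=P_S,\ \textstyle\sum_{s,\hat s}Q(s,x,y,\hat s)=P_{Y|X}(y|x)Q_X(x)\ \forall x,y,\ I_f(Q_{S,\widehat S})\le I_f(Q_{X,Y})\}$$ is convex.
   Context: $\mathcal S,\mathcal X,\mathcal Y,\widehat{\mathcal S}$ are finite nonempty sets, $\mathcal Z=\mathcal S\times\mathcal X\times\mathcal Y\times\widehat{\mathcal S}$, $P_S$ is a fixed pmf on $\mathcal S$ and $P_{Y|X}$ a fixed channel from $\mathcal X$ to $\mathcal Y$. For a pmf $Q$ on $\mathcal Z$, $Q_S,Q_X$ denote marginals and $Q_{S,\widehat S},Q_{X,Y}$ the pairwise marginals. For $f:(0,\infty)\to\mathbb R$ convex, let $f'(\infty)=\lim_{t\to\infty}f(t)/t\in(-\infty,+\infty]$; for a joint pmf $p(u,v)$ on a finite product set with marginals $p(u),p(v)$, $I_f(p)=\sum_{u,v}\phi(u,v)\in(-\infty,+\infty]$ where $\phi(u,v)=p(u,v)f(p(u)p(v)/p(u,v))$ if $p(u,v)>0$, $\phi(u,v)=p(u)p(v)f'(\infty)$ if $p(u,v)=0<p(u)p(v)$, and $\phi(u,v)=0$ if $p(u)p(v)=0$. A function $f$ has the saddle property if $f:(0,\infty)\to\mathbb R$ is convex and, for all finite sets $\mathcal U,\mathcal V$ and every kernel $p(v|u)$, the map $p_U\mapsto I_f\big(p_U(u)p(v|u)\big)$ is concave on the set of pmfs on $\mathcal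 U$. *)

(* Defs.v *)
From mathcomp Require Import all_boot.
From Stdlib Require Import Reals ClassicalEpsilon.
Set Implicit Arguments. Unset Strict Implicit. Unset Printing Implicit Defensive.

Open Scope R_scope.

Definition rsum (T : finType) (F : T -> R) : R := \big[Rplus/0]_(i : T) F i.

Definition is_pmf (T : finType) (p : T -> R) : Prop :=
  (forall t, 0 <= p t) /\ rsum p = 1.

Inductive ER : Type := Fin (r : R) | PInf.

Definition eradd (a b : ER) : ER :=
  match a, b with Fin x, Fin y => Fin (x + y) | _, _ => PInf end.

Definition ermul (r : R) (a : ER) : ER :=
  match a with Fin x => Fin (r * x) | PInf => PInf end.

Definition erle (a b : ER) : Prop :=
  match a, b with
  | Fin x, Fin y => x <= y
  | _, PInf => True
  | PInf, Fin _ => False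
  end.

Definition convex_pos (f : R -> R) : Prop :=
  forall x y l, 0 < x -> 0 < y -> 0 <= l <= 1 ->
    f (l * x + (1 - l) * y) <= l * f x + (1 - l) * f y.

Definition lim_infty (g : R -> R) (v : ER) : Prop :=
  match v with
  | Fin L => forall eps, 0 < eps -> exists M, forall t, M < t -> Rabs (g t - L) < eps
  | PInf => forall B, exists M, forall t, M < t -> B < g t
  end.

(* f'(oo) = lim_{t->oo} f(t)/t (exists in (-oo,+oo] for convex f) *)
Definition fprime_inf (f : R -> R) : ER :=
  epsilon (inhabits PInf) (fun v => lim_infty (fun t => f t / t) v).

Definition margU (U V : finType) (p : U -> V -> R) (u : U) : R := rsum (fun v => p u v).
Definition margV (U V : finType) (p : U -> V -> R) (v : V) : R := rsum (fun u => p u v).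

Definition phi_f (f : R -> R) (U V : finType) (p : U -> V -> R) (u : U) (v : V) : ER :=
  let q := margU p u * margV p v in
  if Rlt_dec 0 (p u v) then Fin (p u v * f (q / p u v))
  else if Rlt_dec 0 q then ermul q (fprime_inf f)
  else Fin 0.

Definition I_f (f : R -> R) (U V : finType) (p : U -> V -> R) : ER :=
  \big[eradd/Fin 0]_(u : U) \big[eradd/Fin 0]_(v : V) phi_f f p u v.

Definition saddle_property (f : R -> R) : Prop :=
  convex_pos f /\
  forall (U V : finType) (W : U -> V -> R),
    (forall u, is_pmf (W u)) ->
    forall (p1 p2 : U -> R) (l : R), is_pmf p1 -> is_pmf p2 -> 0 < l < 1 ->
      erle (eradd (ermul l (I_f f (fun u v => p1 u * W u v)))
                  (ermul (1 - l) (I_f f (fun u v => p2 u * W u v))))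
           (I_f f (fun u v => (l * p1 u + (1 - l) * p2 u) * W u v)).

(* pmf Q on Z = S x X x Y x Shat, written curried *)
Definition is_pmf4 (S X Y Sh : finType) (Q : S -> X -> Y -> Sh -> R) : Prop :=
  (forall s x y sh, 0 <= Q s x y sh) /\
  rsum (fun s => rsum (fun x => rsum (fun y => rsum (fun sh => Q s x y sh)))) = 1.

Definition Q_S (S X Y Sh : finType) (Q : S -> X -> Y -> Sh -> R) (s : S) : R :=
  rsum (fun x => rsum (fun y => rsum (fun sh => Q s x y sh))).
Definition Q_X (S X Y Sh : finType) (Q : S -> X -> Y -> Sh -> R) (x : X) : R :=
  rsum (fun s => rsum (fun y => rsum (fun sh => Q s x y sh))).
Definition Q_SSh (S X Y Sh : finType) (Q : S -> X -> Y -> Sh -> R) (s : S) (sh : Sh) : R :=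
  rsum (fun x => rsum (fun y => Q s x y sh)).
Definition Q_XY (S X Y Sh : finType) (Q : S -> X -> Y -> Sh -> R) (x : X) (y : Y) : R :=
  rsum (fun s => rsum (fun sh => Q s x y sh)).

Definition in_Q_fDPI (f : R -> R) (S X Y Sh : finType) (PS : S -> R)
    (PYX : X -> Y -> R) (Q : S -> X -> Y -> Sh -> R) : Prop :=
  is_pmf4 Q /\
  (forall s, Q_S Q s = PS s) /\
  (forall x y, rsum (fun s => rsum (fun sh => Q s x y sh)) = PYX x y * Q_X Q x) /\
  erle (I_f f (Q_SSh Q)) (I_f f (Q_XY Q)).

(* Main.v *)
From HB Require Import structures.
Require Import Defs.
From mathcomp Require Import all_boot.
From Stdlib Require Import Reals Lra ClassicalEpsilon FunctionalExtensionality Classical.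
Open Scope R_scope.
HB.instance Definition _ := Monoid.isComLaw.Build R 0 Rplus (fun a b c => esym (Rplus_assoc a b c)) Rplus_comm Rplus_0_l.
Lemma eradd_assoc : associative eradd.
Proof. by case=> [a|] [b|] [c|] //=; rewrite Rplus_assoc. Qed.
Lemma eradd_comm : commutative eradd.
Proof. by case=> [a|] [b|] //=; rewrite Rplus_comm. Qed.
Lemma eradd_0l : left_id (Fin 0) eradd.
Proof. by case=> [a|] //=; rewrite Rplus_0_l. Qed.
HB.instance Definition _ := Monoid.isComLaw.Build ER (Fin 0) eradd eradd_assoc eradd_comm eradd_0l.
Lemma rsum_exch (I J : finType) (F : I -> J -> R) :
  rsum (fun i => rsum (fun j => F i j)) = rsum (fun j => rsum (fun i => F i j)).
Proof. rewrite /rsum; exact: exchange_big. Qed.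
Lemma rsum_ext (I : finType) (F G : I -> R) : (forall i, F i = G i) -> rsum F = rsum G.
Proof. move=> H; rewrite /rsum; apply: eq_bigr => i _; exact: H. Qed.
Lemma rsum_mixP (I : finType) (F A B : I -> R) a b :
  (forall i, F i = a * A i + b * B i) -> rsum F = a * rsum A + b * rsum B.
Proof.
move=> H; rewrite /rsum.
apply: (big_rec3 (fun x y z => x = a * y + b * z)); first by ring.
by move=> i y1 y2 y3 _ ->; rewrite H; ring.
Qed.
Lemma rsum_ge0 (I : finType) (F : I -> R) : (forall i, 0 <= F i) -> 0 <= rsum F.
Proof.
move=> H; rewrite /rsum; apply: (big_ind (fun x => 0 <= x)); first lra.
  by move=> x y; lra.
by move=> i _; apply: H.
Qed.
Lemma rsum_ge_term (I : finType) (F : I -> R) j : (forall i, 0 <= F i) -> F j <= rsum F.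
Proof.
move=> H; rewrite /rsum (bigD1 j) //=.
have : 0 <= \big[Rplus/0]_(i | i != j) F i.
  apply: (big_ind (fun x => 0 <= x)); first lra.
    by move=> x y; lra.
  by move=> i _; apply: H.
lra.
Qed.

Lemma ermul_add r : {morph ermul r : x y / eradd x y >-> eradd x y}.
Proof. by move=> [x|] [y|] //=; rewrite Rmult_plus_distr_l. Qed.
Lemma ermul_big (T : finType) r (F : T -> ER) :
  ermul r (\big[eradd/Fin 0]_(i : T) F i) = \big[eradd/Fin 0]_(i : T) ermul r (F i).
Proof. apply: big_morph; first exact: ermul_add. by rewrite /= Rmult_0_r. Qed.
Lemma erle_add a b c d : erle a c -> erle b d -> erle (eradd a b) (eradd c d).
Proof. by case: a => [a|]; case: b => [b|]; case: c => [c|]; case: d => [d|] //=; lra. Qed.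
Lemma erle_trans a b c : erle a b -> erle b c -> erle a c.
Proof. by case: a => [a|]; case: b => [b|]; case: c => [c|] //=; lra. Qed.
Lemma erle_mul r a b : 0 <= r -> erle a b -> erle (ermul r a) (ermul r b).
Proof. case: a => [a|]; case: b => [b|] //= Hr H. by apply: Rmult_le_compat_l. Qed.

Lemma big_erle_split (T : finType) (F G H : T -> ER) r1 r2 :
  (forall i, erle (F i) (eradd (ermul r1 (G i)) (ermul r2 (H i)))) ->
  erle (\big[eradd/Fin 0]_(i : T) F i)
       (eradd (ermul r1 (\big[eradd/Fin 0]_(i : T) G i)) (ermul r2 (\big[eradd/Fin 0]_(i : T) H i))).
Proof.
move=> HF; rewrite !ermul_big -big_split.
apply: (big_ind2 erle); first by rewrite /=; lra.
  by move=> *; apply: erle_add.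
by move=> i _; apply: HF.
Qed.

Lemma slope_mono f : convex_pos f -> forall x s t, 0 < x -> x < s -> s < t ->
  (f s - f x) / (s - x) <= (f t - f x) / (t - x).
Proof.
move=> Hc x s t Hx Hs Ht.
set lam := (s - x) / (t - x).
have Hl0 : 0 <= lam <= 1.
  rewrite /lam; split.
    apply: Rlt_le; apply: Rdiv_lt_0_compat; lra.
  apply: (Rmult_le_reg_r (t - x)); first lra.
  rewrite /Rdiv Rmult_assoc Rinv_l; lra.
have H := Hc t x lam ltac:(lra) Hx Hl0.
have Es : lam * t + (1 - lam) * x = s by rewrite /lam; field; lra.
rewrite Es in H.
set D := (f t - f x) / (t - x).
have E2 : lam * (f t - f x) = (s - x) * D by rewrite /lam /D; field; lra.
have H3 : f s - f x <= (s - x) * D by nra.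
apply: (Rmult_le_reg_l (s - x)); first lra.
replace ((s - x) * ((f s - f x) / (s - x))) with (f s - f x) by (field; lra).
exact: H3.
Qed.

Lemma limit_exists f : convex_pos f -> exists v, lim_infty (fun t => f t / t) v.
Proof.
move=> Hc.
set h := fun t => (f t - f 1) / (t - 1).
have Hm : forall s t, 1 < s -> s < t -> h s <= h t.
  move=> s t Hs Ht; rewrite /h; apply: slope_mono => //; lra.
have Hft : forall t, 1 < t -> f t / t = f 1 / t + h t * (t - 1) / t.
  by move=> t Ht; rewrite /h; field; lra.
case: (classic (exists L, forall t, 1 < t -> h t <= L)) => [[L0 HL0]|Hnb].
- set E := fun y => exists t, 1 < t /\ y = h t.
  have Hb : bound E by exists L0 => y [t [Ht ->]]; apply: HL0.
  have Hne : exists y, E y by exists (h 2), 2; split => //; lra.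
  case: (completeness E Hb Hne) => L [HLu HLl].
  exists (Fin L) => eps Heps /=.
  have [t0 [Ht0 Ht0L]] : exists t0, 1 < t0 /\ L - eps / 2 < h t0.
    apply: NNPP => Hn.
    have : L <= L - eps / 2.
      apply: HLl => y [t [Ht ->]].
      apply: Rnot_lt_le => Hlt; apply: Hn; exists t; split => //.
    lra.
  set K := Rabs (f 1) + Rabs L + eps.
  have HK : 0 < K by rewrite /K; move: (Rabs_pos (f 1)) (Rabs_pos L); lra.
  exists (Rmax t0 (2 * K / eps)) => t Ht.
  have Ht0' : t0 < t by move: (Rmax_l t0 (2 * K / eps)); lra.
  have HtK : 2 * K / eps < t by move: (Rmax_r t0 (2 * K / eps)); lra.
  have HtK' : 2 * K < eps * t.
    apply: (Rmult_lt_reg_r (/ eps)); first by apply: Rinv_0_lt_compat.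
    replace (eps * t * / eps) with t by (field; lra). exact: HtK.
  have Ht1 : 1 < t by lra.
  have Hht1 : L - eps / 2 < h t by move: (Hm t0 t Ht0 Ht0'); lra.
  have Hht2 : h t <= L by apply: HLu; exists t; split.
  have Ea1 := Rle_abs (f 1). have Ea2 := Rabs_pos L.
  have Ea3 : - Rabs (f 1) <= f 1 by move: (Rle_abs (- f 1)); rewrite Rabs_Ropp; lra.
  have Ea4 : - Rabs L <= L by move: (Rle_abs (- L)); rewrite Rabs_Ropp; lra.
  have Ea5 : L <= Rabs L by apply: Rle_abs.
  set u := (f 1 - h t) / t.
  have Eu : u * t = f 1 - h t by rewrite /u; field; lra.
  have Hft' : f t / t - L = u + (h t - L) by rewrite Hft // /u; field; lra.
  rewrite Hft'.
  have Hu1 : u * t < eps / 2 * t by rewrite Eu /K in HtK' *; lra.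
  have Hu2 : - (eps / 2) * t < u * t by rewrite Eu /K in HtK' *; lra.
  have Hu1' : u < eps / 2 by nra.
  have Hu2' : - (eps / 2) < u by nra.
  apply: Rabs_def1; lra.
- exists PInf => B /=.
  have [t0 [Ht0 Hh0]] : exists t0, 1 < t0 /\ 2 * Rabs B + 2 < h t0.
    apply: NNPP => Hn; apply: Hnb; exists (2 * Rabs B + 2) => t Ht.
    apply: Rnot_lt_le => Hlt; apply: Hn; exists t; split => //.
  exists (Rmax (Rmax t0 2) (Rabs (f 1) + 1)) => t Ht.
  have H1 : t0 < t by move: (Rmax_l (Rmax t0 2) (Rabs (f 1) + 1)) (Rmax_l t0 2); lra.
  have H2 : 2 < t by move: (Rmax_l (Rmax t0 2) (Rabs (f 1) + 1)) (Rmax_r t0 2); lra.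
  have H3 : Rabs (f 1) + 1 < t by move: (Rmax_r (Rmax t0 2) (Rabs (f 1) + 1)); lra.
  have Hht : 2 * Rabs B + 2 < h t by move: (Hm t0 t Ht0 H1); lra.
  have Ea3 : - Rabs (f 1) <= f 1 by move: (Rle_abs (- f 1)); rewrite Rabs_Ropp; lra.
  have Eb : B <= Rabs B by apply: Rle_abs.
  have Eb0 := Rabs_pos B.
  set w := f t / t.
  have Ew : w * t = f 1 + h t * (t - 1) by rewrite /w Hft; [field|]; lra.
  apply: Rnot_le_lt => Hw.
  have : w * t <= B * t by nra.
  rewrite Ew => Hc2.
  have : (2 * Rabs B + 2) * (t - 1) < h t * (t - 1) by nra.
  nra.
Qed.

Lemma slope_bound f L : convex_pos f -> lim_infty (fun t => f t / t) (Fin L) ->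
  forall x t, 0 < x -> 0 < t -> f (x + t) <= f x + t * L.
Proof.
move=> Hc Hl x t Hx Ht.
apply: Rnot_lt_le => Hlt.
set D := (f (x + t) - f x) / t.
have HD : L < D.
  rewrite /D; apply: (Rmult_lt_reg_r t) => //.
  replace ((f (x + t) - f x) / t * t) with (f (x + t) - f x) by (field; lra). lra.
set del := D - L.
have [M HM] := Hl (del / 2) ltac:(rewrite /del; lra).
set c := f x - D * x.
set y := Rmax (Rmax (M + 1) (x + t + 1)) (2 * Rabs c / del + 1).
have Hy1 : M < y by rewrite /y; move: (Rmax_l (Rmax (M + 1) (x + t + 1)) (2 * Rabs c / del + 1)) (Rmax_l (M + 1) (x + t + 1)); lra.
have Hy2 : x + t < y by rewrite /y; move: (Rmax_l (Rmax (M + 1) (x + t + 1)) (2 * Rabs c / del + 1)) (Rmax_r (M + 1) (x + t + 1)); lra.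
have Hy3 : 2 * Rabs c / del < y by rewrite /y; move: (Rmax_r (Rmax (M + 1) (x + t + 1)) (2 * Rabs c / del + 1)); lra.
have Hdel : 0 < del by rewrite /del; lra.
have Hy3' : 2 * Rabs c < del * y.
  apply: (Rmult_lt_reg_r (/ del)); first by apply: Rinv_0_lt_compat.
  replace (del * y * / del) with y by (field; lra). exact: Hy3.
have Hc' : - Rabs c <= c by move: (Rle_abs (- c)); rewrite Rabs_Ropp; lra.
have Hsl : D <= (f y - f x) / (y - x).
  case: (Req_dec (x + t) y) => [<-|Hne].
    rewrite /D; replace (x + t - x) with t by ring; lra.
  have := @slope_mono f Hc x (x + t) y Hx ltac:(lra) ltac:(lra).
  by replace (x + t - x) with t by ring.
have Hfy : D * (y - x) <= f y - f x.
  apply: (Rmult_le_reg_r (/ (y - x))); first by apply: Rinv_0_lt_compat; lra.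
  replace (D * (y - x) * / (y - x)) with D by (field; lra). exact: Hsl.
have := HM y Hy1.
set w := f y / y.
have Ew : w * y = f y by rewrite /w; field; lra.
move=> Hab; have [Hab1 Hab2] := Rabs_def2 _ _ Hab.
have H1 : w * y < (L + del / 2) * y by nra.
rewrite Ew in H1.
have H2 : f y >= D * y + c by rewrite /c; lra.
have H3 : (L + del / 2) * y = D * y - del * y / 2 by rewrite /del; field.
lra.
Qed.

Lemma perspective f l a1 a2 b1 b2 : convex_pos f -> 0 < l < 1 ->
  0 < a1 -> 0 < a2 -> 0 < b1 -> 0 < b2 ->
  (l * a1 + (1 - l) * a2) * f ((l * b1 + (1 - l) * b2) / (l * a1 + (1 - l) * a2))
  <= l * (a1 * f (b1 / a1)) + (1 - l) * (a2 * f (b2 / a2)).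
Proof.
move=> Hc Hl H1 H2 H3 H4.
set a := l * a1 + (1 - l) * a2.
have Ha : 0 < a by rewrite /a; nra.
set mu := l * a1 / a.
have Hmu : 0 <= mu <= 1.
  rewrite /mu; split.
    apply: Rlt_le; apply: Rdiv_lt_0_compat => //; nra.
  apply: (Rmult_le_reg_r a) => //.
  replace (l * a1 / a * a) with (l * a1) by (field; lra). rewrite /a; nra.
have E : (l * b1 + (1 - l) * b2) / a = mu * (b1 / a1) + (1 - mu) * (b2 / a2).
  by rewrite /mu /a; field; repeat split; nra.
rewrite E.
have Hx : 0 < b1 / a1 by apply: Rdiv_lt_0_compat.
have Hy : 0 < b2 / a2 by apply: Rdiv_lt_0_compat.
have HH := Hc _ _ _ Hx Hy Hmu.
have E1 : a * mu = l * a1 by rewrite /mu; field; lra.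
have E2 : a * (1 - mu) = (1 - l) * a2 by rewrite /mu /a; field; nra.
apply: (Rle_trans _ (a * (mu * f (b1 / a1) + (1 - mu) * f (b2 / a2)))).
  by apply: Rmult_le_compat_l => //; lra.
apply: Req_le.
transitivity ((a * mu) * f (b1 / a1) + (a * (1 - mu)) * f (b2 / a2)); first ring.
rewrite E1 E2; ring.
Qed.

Definition phiv f a b : ER :=
  if Rlt_dec 0 a then Fin (a * f (b / a))
  else if Rlt_dec 0 b then ermul b (fprime_inf f)
  else Fin 0.

Lemma fprime_lim f : convex_pos f -> lim_infty (fun t => f t / t) (fprime_inf f).
Proof.
move=> Hc; rewrite /fprime_inf.
exact: (epsilon_spec (inhabits PInf) _ (limit_exists f Hc)).
Qed.

Lemma phiv_half f l a1 a2 b1 b2 : convex_pos f -> 0 < l < 1 ->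
  0 < a1 -> a2 = 0 -> 0 < b1 -> 0 <= b2 ->
  erle (phiv f (l * a1 + (1 - l) * a2) (l * b1 + (1 - l) * b2))
       (eradd (ermul l (phiv f a1 b1)) (ermul (1 - l) (phiv f a2 b2))).
Proof.
move=> Hc Hl H1 H2 H3 H4; subst a2.
have Hlim := fprime_lim f Hc.
rewrite /phiv.
case: (Rlt_dec 0 (l * a1 + (1 - l) * 0)) => Hm; last by exfalso; nra.
case: (Rlt_dec 0 a1) => Ha1 //.
case: (Rlt_dec 0 0) => H0; first lra.
case: (Rlt_dec 0 b2) => Hb2.
- move: Hlim; case: (fprime_inf f) => [L|] Hlim //=.
  have Hx : 0 < b1 / a1 by apply: Rdiv_lt_0_compat.
  have Ht : 0 < (1 - l) * b2 / (l * a1) by apply: Rdiv_lt_0_compat; nra.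
  have HB := @slope_bound f L Hc Hlim _ _ Hx Ht.
  have E : (l * b1 + (1 - l) * b2) / (l * a1 + (1 - l) * 0) = b1 / a1 + (1 - l) * b2 / (l * a1)
    by field; lra.
  rewrite E.
  apply: (Rle_trans _ ((l * a1 + (1 - l) * 0) * (f (b1 / a1) + (1 - l) * b2 / (l * a1) * L))).
    by apply: Rmult_le_compat_l => //; lra.
  apply: Req_le; field; lra.
- have Eb2 : b2 = 0 by lra.
  rewrite /=.
  have E : (l * b1 + (1 - l) * b2) / (l * a1 + (1 - l) * 0) = b1 / a1 by rewrite Eb2; field; lra.
  rewrite E; apply: Req_le; ring.
Qed.

Lemma phiv_convex f l a1 a2 b1 b2 : convex_pos f -> 0 < l < 1 ->
  0 <= a1 -> 0 <= a2 -> 0 <= b1 -> 0 <= b2 -> (0 < a1 -> 0 < b1) -> (0 < a2 -> 0 < b2) ->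
  erle (phiv f (l * a1 + (1 - l) * a2) (l * b1 + (1 - l) * b2))
       (eradd (ermul l (phiv f a1 b1)) (ermul (1 - l) (phiv f a2 b2))).
Proof.
move=> Hc Hl H1 H2 H3 H4 H5 H6.
destruct (Rle_lt_or_eq_dec _ _ H1) as [Ha1|Ha1]; destruct (Rle_lt_or_eq_dec _ _ H2) as [Ha2|Ha2].
- rewrite /phiv.
  case: (Rlt_dec 0 (l * a1 + (1 - l) * a2)) => Hm; last by exfalso; nra.
  case: (Rlt_dec 0 a1) => // Ha1'; case: (Rlt_dec 0 a2) => // Ha2' /=.
  apply: perspective => //; auto.
- apply: phiv_half => //; auto.
-
  have Hl' : 0 < 1 - l < 1 by lra.
  have := @phiv_half f (1 - l) a2 a1 b2 b1 Hc Hl' Ha2 (esym Ha1) (H6 Ha2) H3.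
  replace (1 - (1 - l)) with l by ring.
  replace ((1 - l) * a2 + l * a1) with (l * a1 + (1 - l) * a2) by ring.
  replace ((1 - l) * b2 + l * b1) with (l * b1 + (1 - l) * b2) by ring.
  by rewrite eradd_comm.
- rewrite -Ha1 -Ha2 /phiv.
  have Hlim := fprime_lim f Hc.
  case: (Rlt_dec 0 (l * 0 + (1 - l) * 0)) => Hm; first by exfalso; nra.
  case: (Rlt_dec 0 0) => H0; first lra.
  case: (Rlt_dec 0 (l * b1 + (1 - l) * b2)) => Hb.
  + move: Hlim; case: (fprime_inf f) => [L|] Hlim.
    * case: (Rlt_dec 0 b1) => Hb1; case: (Rlt_dec 0 b2) => Hb2 /=; apply: Req_le.
      -- ring.
      -- have -> : b2 = 0 by lra. ring.
      -- have -> : b1 = 0 by lra. ring.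
      -- exfalso; nra.
    * case: (Rlt_dec 0 b1) => Hb1; case: (Rlt_dec 0 b2) => Hb2 //=.
      exfalso; nra.
  + have Hb1 : ~ 0 < b1 by nra.
    have Hb2 : ~ 0 < b2 by nra.
    case: (Rlt_dec 0 b1) => // Hb1'; case: (Rlt_dec 0 b2) => // Hb2' /=; lra.
Qed.

Lemma phi_fE f (U V : finType) (p : U -> V -> R) u v :
  phi_f f p u v = phiv f (p u v) (margU p u * margV p v).
Proof. by []. Qed.

Lemma I_f_conv_chan f (U V : finType) (p1 p2 : U -> V -> R) l :
  convex_pos f -> 0 < l < 1 ->
  (forall u v, 0 <= p1 u v) -> (forall u v, 0 <= p2 u v) ->
  (forall u, margU p1 u = margU p2 u) ->
  erle (I_f f (fun u v => l * p1 u v + (1 - l) * p2 u v))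
       (eradd (ermul l (I_f f p1)) (ermul (1 - l) (I_f f p2))).
Proof.
move=> Hc Hl H1 H2 Hm.
rewrite /I_f; apply: big_erle_split => u; apply: big_erle_split => v.
rewrite !phi_fE.
have EU : margU (fun u v => l * p1 u v + (1 - l) * p2 u v) u = l * margU p1 u + (1 - l) * margU p2 u.
  by rewrite /margU; apply: rsum_mixP.
have EV : margV (fun u v => l * p1 u v + (1 - l) * p2 u v) v = l * margV p1 v + (1 - l) * margV p2 v.
  by rewrite /margV; apply: rsum_mixP.
rewrite EU EV.
have -> : (l * margU p1 u + (1 - l) * margU p2 u) * (l * margV p1 v + (1 - l) * margV p2 v)
   = l * (margU p1 u * margV p1 v) + (1 - l) * (margU p2 u * margV p2 v).
  rewrite -Hm; ring.
have mU1 : p1 u v <= margU p1 u by apply: rsum_ge_term => i; apply: H1.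
have mV1 : p1 u v <= margV p1 v by apply: rsum_ge_term => i; apply: H1.
have mU2 : p2 u v <= margU p2 u by apply: rsum_ge_term => i; apply: H2.
have mV2 : p2 u v <= margV p2 v by apply: rsum_ge_term => i; apply: H2.
have := H1 u v; have := H2 u v => h2 h1.
apply: phiv_convex => //.
- by apply: Rmult_le_pos; lra.
- by apply: Rmult_le_pos; lra.
- move=> h; apply: Rmult_lt_0_compat; lra.
- move=> h; apply: Rmult_lt_0_compat; lra.
Qed.

Lemma I_f_ext f (U V : finType) (p q : U -> V -> R) :
  (forall u v, p u v = q u v) -> I_f f p = I_f f q.
Proof.
move=> H; have -> // : p = q.
by apply: functional_extensionality => u; apply: functional_extensionality => v.
Qed.

Theorem lemma4p4 (S X Y Sh : finType)
  (s0 : S) (x0 : X) (y0 : Y) (sh0 : Sh)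
  (PS : S -> R) (PYX : X -> Y -> R) (f : R -> R) :
  is_pmf PS -> (forall x, is_pmf (PYX x)) ->
  saddle_property f ->
  forall (Q1 Q2 : S -> X -> Y -> Sh -> R) (l : R),
    in_Q_fDPI f PS PYX Q1 -> in_Q_fDPI f PS PYX Q2 -> 0 <= l <= 1 ->
    in_Q_fDPI f PS PYX (fun s x y sh => l * Q1 s x y sh + (1 - l) * Q2 s x y sh).
Proof.
move=> HPS HPYX [Hc Hsad] Q1 Q2 l [[P1a P1b] [S1 [C1 D1]]] [[P2a P2b] [S2 [C2 D2]]] Hl.
set Q := fun s x y sh => l * Q1 s x y sh + (1 - l) * Q2 s x y sh.
have ES : forall s, Q_S Q s = l * Q_S Q1 s + (1 - l) * Q_S Q2 s.
  move=> s; rewrite /Q_S; apply: rsum_mixP => x; apply: rsum_mixP => y;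
  by apply: rsum_mixP => sh.
have EX : forall x, Q_X Q x = l * Q_X Q1 x + (1 - l) * Q_X Q2 x.
  move=> x; rewrite /Q_X; apply: rsum_mixP => s; apply: rsum_mixP => y;
  by apply: rsum_mixP => sh.
have EXY : forall x y, Q_XY Q x y = l * Q_XY Q1 x y + (1 - l) * Q_XY Q2 x y.
  move=> x y; rewrite /Q_XY; apply: rsum_mixP => s; by apply: rsum_mixP => sh.
have ESS : forall s sh, Q_SSh Q s sh = l * Q_SSh Q1 s sh + (1 - l) * Q_SSh Q2 s sh.
  move=> s sh; rewrite /Q_SSh; apply: rsum_mixP => x; by apply: rsum_mixP => y.
split; [split|split; [|split]].
- move=> s x y sh; rewrite /Q; move: (P1a s x y sh) (P2a s x y sh); nra.
- change (rsum (fun s => Q_S Q s) = 1).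
  rewrite (@rsum_mixP _ _ (Q_S Q1) (Q_S Q2) _ _ ES).
  change (rsum (fun s => Q_S Q1 s)) with
    (rsum (fun s => rsum (fun x => rsum (fun y => rsum (fun sh => Q1 s x y sh))))).
  change (rsum (fun s => Q_S Q2 s)) with
    (rsum (fun s => rsum (fun x => rsum (fun y => rsum (fun sh => Q2 s x y sh))))).
  rewrite P1b P2b; ring.
- by move=> s; rewrite ES S1 S2; ring.
- move=> x y.
  change (Q_XY Q x y = PYX x y * Q_X Q x).
  rewrite EXY EX.
  have c1 : Q_XY Q1 x y = PYX x y * Q_X Q1 x by exact: C1.
  have c2 : Q_XY Q2 x y = PYX x y * Q_X Q2 x by exact: C2.
  rewrite c1 c2; ring.
- have c1 : forall x y, Q_XY Q1 x y = Q_X Q1 x * PYX x y.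
    by move=> x y; rewrite Rmult_comm; exact: C1.
  have c2 : forall x y, Q_XY Q2 x y = Q_X Q2 x * PYX x y.
    by move=> x y; rewrite Rmult_comm; exact: C2.
  case: (Req_dec l 0) => Hl0.
    rewrite (@I_f_ext f _ _ (Q_SSh Q) (Q_SSh Q2)); last by move=> *; rewrite ESS Hl0; ring.
    rewrite (@I_f_ext f _ _ (Q_XY Q) (Q_XY Q2)); last by move=> *; rewrite EXY Hl0; ring.
    exact: D2.
  case: (Req_dec l 1) => Hl1.
    rewrite (@I_f_ext f _ _ (Q_SSh Q) (Q_SSh Q1)); last by move=> *; rewrite ESS Hl1; ring.
    rewrite (@I_f_ext f _ _ (Q_XY Q) (Q_XY Q1)); last by move=> *; rewrite EXY Hl1; ring.
    exact: D1.
  have Hl' : 0 < l < 1 by lra.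
  have nnSS : forall (Qi : S -> X -> Y -> Sh -> R), (forall s x y sh, 0 <= Qi s x y sh) ->
      forall s sh, 0 <= Q_SSh Qi s sh.
    move=> Qi H s sh; apply: rsum_ge0 => x; apply: rsum_ge0 => y; exact: H.
  have mSS : forall (Qi : S -> X -> Y -> Sh -> R) s, margU (Q_SSh Qi) s = Q_S Qi s.
    move=> Qi s.
    transitivity (rsum (fun sh => rsum (fun x => rsum (fun y => Qi s x y sh)))); first by [].
    rewrite rsum_exch; apply: rsum_ext => x; exact: rsum_exch.
  have pmfX : forall (Qi : S -> X -> Y -> Sh -> R), is_pmf4 Qi -> is_pmf (Q_X Qi).
    move=> Qi [Ha Hb]; split.
      move=> x; apply: rsum_ge0 => s; apply: rsum_ge0 => y; apply: rsum_ge0 => sh; exact: Ha.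
    rewrite -Hb.
    transitivity (rsum (fun x => rsum (fun s => rsum (fun y => rsum (fun sh => Qi s x y sh))))); first by [].
    exact: rsum_exch.
  rewrite (@I_f_ext f _ _ (Q_SSh Q) _ ESS).
  have Hconv := @I_f_conv_chan f _ _ (Q_SSh Q1) (Q_SSh Q2) l Hc Hl' (nnSS _ P1a) (nnSS _ P2a)
     (fun s => etrans (mSS Q1 s) (etrans (S1 s) (esym (etrans (mSS Q2 s) (S2 s))))).
  apply: (erle_trans _ _ _ Hconv).
  have Hmono : erle (eradd (ermul l (I_f f (Q_SSh Q1))) (ermul (1 - l) (I_f f (Q_SSh Q2))))
                    (eradd (ermul l (I_f f (Q_XY Q1))) (ermul (1 - l) (I_f f (Q_XY Q2)))).
    apply: erle_add; apply: erle_mul => //; lra.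
  apply: (erle_trans _ _ _ Hmono).
  rewrite (@I_f_ext f _ _ (Q_XY Q1) _ c1) (@I_f_ext f _ _ (Q_XY Q2) _ c2).
  rewrite (@I_f_ext f _ _ (Q_XY Q) (fun u v => (l * Q_X Q1 u + (1 - l) * Q_X Q2 u) * PYX u v));
    last by move=> x y; rewrite EXY c1 c2; ring.
  apply: Hsad => //.
  + exact: pmfX.
  + exact: pmfX.
Qed.
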